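(* Let $T_{ab}$ be any rank-2 tensor. Then $T_{ac}T_b{}^c=f g_{ab}$ for some real $f$ if and only if $T_a{}^b$ is a null-cone preserving map, i.e. $k^aT_a{}^b$ is null or zero for every null vector $k$.
   Context: Lorentzian metric $g_{ab}$ of signature $(+,-,\dots,-)$ in dimension $N\ge2$; a vector $v$ is null if $v\neq0$ and $v_av^a=0$. *)

(* Defs.v *)
From mathcomp Require Import all_boot all_order all_algebra.
Set Implicit Arguments. Unset Strict Implicit. Unset Printing Implicit Defensive.
Import Order.TTheory GRing.Theory Num.Theory.
Local Open Scope ring_scope.

(* Components in a fixed (arbitrary) basis of R^N.  Covariant objects
   (T_ab, g_ab) are N x N matrices; a vector k^a is a row vector 'rV_N. *)

Definition eta (R : pzRingType) (N : nat) : 'M[R]_N :=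
  diag_mx (\row_(i < N) (if val i == 0%N then 1 else -1)).

Definition lorentzian (R : comUnitRingType) (N : nat) (g : 'M[R]_N) : Prop :=
  g^T = g /\ exists P : 'M[R]_N, P \in unitmx /\ P^T *m g *m P = eta R N.

Definition gnorm (R : pzRingType) (N : nat) (g : 'M[R]_N) (v : 'rV[R]_N) : R :=
  (v *m g *m v^T) 0 0.

Definition is_null (R : pzRingType) (N : nat) (g : 'M[R]_N) (v : 'rV[R]_N) : Prop :=
  v <> 0 /\ gnorm g v = 0.

(* mixed tensor T_a^b = T_ac g^{cb} *)
Definition mixed (R : comUnitRingType) (N : nat) (g T : 'M[R]_N) : 'M[R]_N :=
  T *m invmx g.

Definition TT (R : comUnitRingType) (N : nat) (g T : 'M[R]_N) : 'M[R]_N :=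
  \matrix_(a, b) \sum_(c < N) T a c * mixed g T b c.

Definition act (R : comUnitRingType) (N : nat) (g T : 'M[R]_N) (k : 'rV[R]_N)
  : 'rV[R]_N := k *m mixed g T.

Definition null_cone_preserving (R : comUnitRingType) (N : nat) (g T : 'M[R]_N)
  : Prop :=
  forall k : 'rV[R]_N, is_null g k -> act g T k = 0 \/ is_null g (act g T k).

(* Main.v *)
Require Import Defs.
From mathcomp Require Import all_boot all_order all_algebra.
From mathcomp Require Import ring.
Import Order.TTheory GRing.Theory Num.Theory.
Set Implicit Arguments. Unset Strict Implicit.
Local Open Scope ring_scope.

Definition Bf (R : pzRingType) n (M : 'M[R]_n) (u v : 'rV[R]_n) : R :=
  (u *m M *m v^T) 0 0.

Section B.
Variable R : comNzRingType.
Variable n : nat.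
Implicit Types (M : 'M[R]_n) (u v w : 'rV[R]_n).

Lemma BfDl M u v w : Bf M (u + v) w = Bf M u w + Bf M v w.
Proof. by rewrite /Bf !mulmxDl mxE. Qed.
Lemma BfDr M u v w : Bf M w (u + v) = Bf M w u + Bf M w v.
Proof. by rewrite /Bf (raddfD (@trmx _ _ _)) mulmxDr mxE. Qed.
Lemma BfZl M a u w : Bf M (a *: u) w = a * Bf M u w.
Proof. by rewrite /Bf -!scalemxAl mxE. Qed.
Lemma BfZr M a u w : Bf M w (a *: u) = a * Bf M w u.
Proof. rewrite /Bf. have -> : (a *: u)^T = a *: u^T by apply/matrixP=> i j; rewrite !mxE.
by rewrite -scalemxAr mxE. Qed.
Lemma Be M p q : Bf M (delta_mx 0 p) (delta_mx 0 q) = M p q.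
Proof. by rewrite /Bf -rowE trmx_delta -colE !mxE. Qed.

Lemma exp3 M a b c p q r :
  Bf M (a *: delta_mx 0 p + b *: delta_mx 0 q + c *: delta_mx 0 r)
       (a *: delta_mx 0 p + b *: delta_mx 0 q + c *: delta_mx 0 r) =
  a*a*M p p + a*b*M p q + a*c*M p r + b*a*M q p + b*b*M q q + b*c*M q r
  + c*a*M r p + c*b*M r q + c*c*M r r.
Proof.
rewrite !(BfDl, BfZl) !(BfDr, BfZr) !Be.
by rewrite !mulrDr !mulrA !addrA.
Qed.
End B.

Lemma etaE (R : pzRingType) N (p q : 'I_N) :
  eta R N p q = if p == q then (if val p == 0%N then 1 else -1) else 0.
Proof. rewrite /eta !mxE. by case: (p == q); rewrite ?mulr1n ?mulr0n.
Qed.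

From mathcomp Require Import lra.

Lemma core (R : rcfType) n (M : 'M[R]_n.+1) : M^T = M ->
  (forall u, Bf (eta R n.+1) u u = 0 -> Bf M u u = 0) -> M = M ord0 ord0 *: eta R n.+1.
Proof.
move=> HM H.
have Ms p q : M q p = M p q by rewrite -{1}HM mxE.
have K a b c p q r :
  a*a*(eta R n.+1) p p + a*b*(eta R n.+1) p q + a*c*(eta R n.+1) p r + b*a*(eta R n.+1) q p + b*b*(eta R n.+1) q q + b*c*(eta R n.+1) q r
  + c*a*(eta R n.+1) r p + c*b*(eta R n.+1) r q + c*c*(eta R n.+1) r r = 0 ->
  a*a*M p p + a*b*M p q + a*c*M p r + b*a*M q p + b*b*M q q + b*c*M q r
  + c*a*M r p + c*b*M r q + c*c*M r r = 0.
  by move=> h; rewrite -exp3; apply: H; rewrite exp3.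
have nz (p : 'I_n.+1) : p != ord0 -> [/\ (p == ord0) = false, (ord0 == p) = false
   & (val p == 0%N) = false].
  by move=> hp; split; [exact: negbTE hp | rewrite eq_sym; exact: negbTE hp | exact: negbTE hp].
have A (j : 'I_n.+1) : j != ord0 -> M ord0 j = 0 /\ M j j = - M ord0 ord0.
  move=> /nz[h1 h2 h3].
  have e1 := K 1 1 0 ord0 j j; have e2 := K 1 (-1) 0 ord0 j j.
  rewrite !etaE !eqxx ?h1 ?h2 ?h3 /= in e1 e2.
  rewrite (Ms ord0 j) in e1 e2.
  have {}e1 := e1 ltac:(lra). have {}e2 := e2 ltac:(lra).
  split; lra.
have Bd (i j : 'I_n.+1) : i != ord0 -> j != ord0 -> i != j -> M i j = 0.
  move=> hi hj hij.
  have [a1 a2] := A i hi; have [b1 b2] := A j hj.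
  have [i1 i2 i3] := nz i hi; have [j1 j2 j3] := nz j hj.
  have e := K 5 3 4 ord0 i j.
  rewrite !etaE !eqxx i1 i2 i3 j1 j2 j3 (negbTE hij) (eq_sym j i) (negbTE hij) /= in e.
  rewrite (Ms ord0 i) (Ms ord0 j) (Ms i j) a1 a2 b1 b2 in e.
  have {}e := e ltac:(lra). lra.
apply/matrixP => i j; rewrite mxE etaE.
have [->|hi] := eqVneq i ord0; have [->|hj] := eqVneq j ord0.
- by rewrite eqxx /= mulr1.
- have [h1 h2 h3] := nz j hj; rewrite ?h2 mulr0; exact: (A j hj).1.
- have [h1 h2 h3] := nz i hi; rewrite ?h1 mulr0 Ms; exact: (A i hi).1.
- have [h1 h2 h3] := nz i hi.
  have [<-|hij] := eqVneq i j.
    by rewrite ?eqxx ?h3 (A i hi).2 mulrN1.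
  by rewrite ?(negbTE hij) mulr0 Bd.
Qed.

Lemma canc (R : comUnitRingType) n (P X Y : 'M[R]_n) : P \in unitmx ->
  P^T *m X *m P = P^T *m Y *m P -> X = Y.
Proof.
move=> Pu h; have := congr1 (fun Z => invmx P^T *m Z *m invmx P) h.
by rewrite /= !mulmxA mulVmx ?unitmx_tr // !mul1mx !mulmxK.
Qed.

Lemma BfP (R : comUnitRingType) n (P M : 'M[R]_n) u :
  Bf M (u *m P^T) (u *m P^T) = Bf (P^T *m M *m P) u u.
Proof. by rewrite /Bf trmx_mul trmxK !mulmxA. Qed.

Lemma BfZ (R : comUnitRingType) n (f : R) (M : 'M[R]_n) u :
  Bf (f *: M) u u = f * Bf M u u.
Proof. by rewrite /Bf -scalemxAr -scalemxAl mxE. Qed.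

Lemma etau (R : comUnitRingType) n : eta R n \in unitmx.
Proof.
have h : eta R n *m eta R n = 1%:M.
  apply/matrixP => i j; rewrite /eta mul_diag_mx !mxE.
  have hx : forall b : bool, (if b then 1 else -1) * (if b then 1 else -1) = 1 :> R by case => /=; rewrite ?mulr1 ?mulrNN ?mulr1.
  by rewrite -?mulrnAr ?mulrnAr hx.
by case: (mulmx1_unit h).
Qed.

Theorem mainTheorem8 (R : rcfType) (N : nat) (hN : (2 <= N)%N)
  (g : 'M[R]_N) (hg : lorentzian g) (T : 'M[R]_N) :
  (exists f : R, TT g T = f *: g) <-> null_cone_preserving g T.
Proof.
case: N hN g hg T => [|[|n]] // _ g [gs [P [Pu HP]]] T.
have gu : g \in unitmx.
  have := etau R n.+2; rewrite -HP !unitmx_mul.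
  by case/andP=> /andP[].
set G := invmx g.
have Gs : G^T = G by rewrite /G trmx_inv gs.
set M := T *m G *m T^T.
have HTT : TT g T = M.
  have -> : TT g T = T *m (T *m G)^T.
    apply/matrixP=> a b; rewrite mxE [RHS]mxE; apply: eq_bigr => c _.
    by rewrite [in RHS]mxE.
  by rewrite trmx_mul Gs mulmxA.
have Ms : M^T = M by rewrite /M !trmx_mul trmxK Gs !mulmxA.
have key k : Defs.gnorm g (act g T k) = Bf M k k.
  rewrite /Defs.gnorm /act /mixed /Bf -/G !trmx_mul Gs !mulmxA.
  by rewrite -(mulmxA _ g G) mulmxV // mulmx1.
rewrite HTT; split.
- move=> [f Hf] k [k0 nk].
  have [a0|a0] := eqVneq (act g T k) 0; [by left | right; split; first exact/eqP].
  by rewrite key Hf BfZ; rewrite /Defs.gnorm in nk; rewrite /Bf nk mulr0.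
- move=> H; exists ((P^T *m M *m P) ord0 ord0).
  have Mt : P^T *m M *m P = (P^T *m M *m P) ord0 ord0 *: eta R n.+2.
    apply: core; first by rewrite 2!trmx_mul trmxK Ms !mulmxA.
    move=> u hu.
    have [->|u0] := eqVneq u 0; first by rewrite /Bf !mul0mx mxE.
    set k := u *m P^T.
    have k0 : k != 0.
      apply: contraNneq u0 => k0.
      have : k *m invmx P^T = u by rewrite /k mulmxK ?unitmx_tr.
      by rewrite k0 mul0mx => <-.
    have nk : is_null g k.
      split; first exact/eqP.
      change (Bf g k k = 0); rewrite /k BfP HP; exact: hu.
    rewrite -BfP -/k -key.
    case: (H k nk) => [->|[_ ->]] //.
    by rewrite /Defs.gnorm !mul0mx mxE.
  rewrite -HP scalemxAl scalemxAr in Mt.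
  exact: canc Pu Mt.
Qed.
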